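(* Let $\mathcal{Q}\subseteq 2^E$ ($E$ finite) be Rayleigh (respectively weakly Rayleigh). Then there are matroids $\mathcal{M}$ and $\mathcal{N}$ on $E$ such that $\mathcal{Q}=\mathbf{I}\mathcal{M}\cap\mathbf{S}\mathcal{N}$, where $\mathbf{I}\mathcal{M}$ is the set of independent sets of $\mathcal{M}$ and $\mathbf{S}\mathcal{N}$ the set of spanning sets of $\mathcal{N}$. Moreover, the sets of bases $\mathbf{B}\mathcal{M}$ and $\mathbf{B}\mathcal{N}$ are both Rayleigh (respectively weakly Rayleigh).
   Context: For $\omega:2^E\to[0,\infty)$ not identically zero, $Z(\omega;\mathbf{y})=\sum_S\omega(S)\prod_{e\in S}y_e$; with subscripts denoting partial derivatives, $Z$ is Rayleigh if $Z_eZ_f-Z_{ef}Z\ge0$ for all distinct $e,f$ and all positive $\mathbf{y}$. A set-system $\mathcal{Q}$ is Rayleigh if $Z(\mathcal{Q};\mathbf{y})=\sum_{S\in\mathcal{Q}}\prod_{e\in S}y_e$ is Rayleigh, and weakly Rayleigh if some $\omega\ge0$ with $\{S:\omega(S)>0\}=\mathcal{Q}$ has $Z(\omega;\mathbf{y})$ Rayleigh. *)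

(* Defs.v *)
From HB Require Import structures.
From mathcomp Require Import all_boot all_order all_algebra.
From mathcomp Require Import reals.
Set Implicit Arguments. Unset Strict Implicit. Unset Printing Implicit Defensive.
Import Order.TTheory GRing.Theory Num.Theory.
Local Open Scope ring_scope.

Section Rayleigh.
Variables (R : realType) (E : finType).

Definition Zpol (w : {set E} -> R) (y : E -> R) : R :=
  \sum_(S : {set E}) w S * \prod_(e in S) y e.

(* Partial derivative Z_e of the multiaffine polynomial Z (written out). *)
Definition Zd1 (w : {set E} -> R) (e : E) (y : E -> R) : R :=
  \sum_(S : {set E} | e \in S) w S * \prod_(g in S :\ e) y g.

(* Second partial derivative Z_{ef}, e <> f (written out). *)
Definition Zd2 (w : {set E} -> R) (e f : E) (y : E -> R) : R :=
  \sum_(S : {set E} | (e \in S) && (f \in S)) w S * \prod_(g in (S :\ e) :\ f) y g.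

Definition rayleigh_poly (w : {set E} -> R) : Prop :=
  forall e f : E, e != f -> forall y : E -> R, (forall g, 0 < y g) ->
    Zd1 w e y * Zd1 w f y - Zd2 w e f y * Zpol w y >= 0.

Definition Rayleigh (Q : {set {set E}}) : Prop :=
  Q != set0 /\ rayleigh_poly (fun S => if S \in Q then 1 else 0).

Definition weakly_Rayleigh (Q : {set {set E}}) : Prop :=
  Q != set0 /\
  exists w : {set E} -> R,
    (forall S, 0 <= w S) /\ (forall S, (0 < w S) = (S \in Q)) /\ rayleigh_poly w.

End Rayleigh.

Section Matroid.
Variable E : finType.

Definition is_matroid (I : {set {set E}}) : Prop :=
  [/\ set0 \in I,
      (forall A B : {set E}, B \in I -> A \subset B -> A \in I) &
      (forall A B : {set E}, A \in I -> B \in I -> #|A| < #|B| ->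
         exists2 x, x \in B :\: A & x |: A \in I)]%N.

Definition bases (I : {set {set E}}) : {set {set E}} :=
  [set B in I | [forall A in I, (B \subset A) ==> (A == B)]].

Definition spanning (I : {set {set E}}) : {set {set E}} :=
  [set S : {set E} | [exists B in bases I, B \subset S]].

End Matroid.

(* Main.v *)
Require Import Defs.
From HB Require Import structures.
From mathcomp Require Import all_boot all_order all_algebra.
From mathcomp Require Import reals.
From mathcomp Require Import zify ring lra.
Set Implicit Arguments. Unset Strict Implicit. Unset Printing Implicit Defensive.
Import Order.TTheory GRing.Theory Num.Theory.

Section Comb.
Variable E : finType.
Local Open Scope ring_scope.
Definition csum (c : E -> int) (X : {set E}) : int := \sum_(g in X) c g.

Lemma sum_ind (X A : {set E}) : \sum_(g in X) (((g \in A) : nat)%:Z) = (#|X :&: A|)%:Z.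
Proof.
transitivity (\sum_(g in X | g \in A) (1:int)).
  by rewrite big_mkcondr; apply: eq_bigr => g _; case: (g \in A).
rewrite (eq_bigl (fun g => g \in X :&: A)); last by move=> g; rewrite inE.
by rewrite sumr_const natz.
Qed.
Lemma card_sub (A B : {set E}) : #|A :&: B| = #|B| -> B \subset A.
Proof.
move=> h; have /subset_cardP : A :&: B \subset B by apply: subsetIr.
move=> /(_ h) eqAB; apply/subsetP => x xB.
by move: (eqAB x); rewrite xB inE => /andP [].
Qed.

Lemma card_out (A B : {set E}) : #|A :&: ~: B| = 0%N -> A \subset B.
Proof.
move=> /eqP; rewrite cards_eq0 => /eqP h; apply/subsetP => x xA.
apply: contraT => xB.
have : x \in A :&: ~: B by rewrite inE xA inE xB.
by rewrite h inE.
Qed.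

Lemma arith (N D s : int) : 0 < N -> s < N -> 0 <= N * D + s -> 0 <= D.
Proof.
move=> hN hs h; rewrite leNgt; apply/negP => hD.
have hD' : D <= -1 by lia.
have := ler_wpM2l (ltW hN) hD'; rewrite mulrN1 => h2.
move: h h2; set P := N * D; lia.
Qed.

Variable Q : {set {set E}}.
Hypothesis trop : forall e f, e != f -> forall S0 T0, S0 \in Q -> T0 \in Q ->
  e \in S0 -> f \in S0 -> e \notin T0 -> f \notin T0 -> forall c : E -> int,
  exists X, exists Y, [/\ X \in Q, Y \in Q, [&& e \in X, f \notin X, f \in Y & e \notin Y] &
     csum c S0 + csum c T0 <= csum c X + csum c Y].

Lemma key S T e f (sg : int) : S \in Q -> T \in Q -> e != f -> e \in S -> f \in S ->
  e \notin T -> f \notin T -> (sg = 1 \/ sg = 0 \/ sg = -1) ->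
  exists X Y, [/\ X \in Q, Y \in Q,
    [&& S :&: T \subset X, X \subset S :|: T, S :&: T \subset Y & Y \subset S :|: T],
    [&& e \in X, f \notin X, f \in Y & e \notin Y] &
    sg * (#|S|%:Z + #|T|%:Z) <= sg * (#|X|%:Z + #|Y|%:Z)].
Proof.
move=> SQ TQ ef eS fS eT fT hsg.
pose n := #|E|. pose N : int := (2 * n + 1)%:Z.
pose c g : int := N * ((g \in S :&: T) : nat)%:Z - N * ((g \in ~: (S :|: T)) : nat)%:Z + sg.
have cs X : csum c X = N * #|X :&: (S :&: T)|%:Z - N * #|X :&: ~: (S :|: T)|%:Z + sg * #|X|%:Z.
  rewrite /csum /c big_split big_split /= sumrN -!mulr_sumr !sum_ind sumr_const.
  by rewrite -mulr_natr natz.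
have [X [Y [XQ YQ /and4P [eX fX fY eY] ineq]]] := trop ef SQ TQ eS fS eT fT c.
rewrite !cs in ineq.
have hS1 : #|S :&: (S :&: T)| = #|S :&: T| by rewrite setIA setIid.
have hT1 : #|T :&: (S :&: T)| = #|S :&: T| by rewrite setIC -setIA setIid.
have hS2 : #|S :&: ~: (S :|: T)| = 0%N.
  apply/eqP; rewrite cards_eq0; apply/eqP/setP => x; rewrite !inE.
  by case: (x \in S).
have hT2 : #|T :&: ~: (S :|: T)| = 0%N.
  apply/eqP; rewrite cards_eq0; apply/eqP/setP => x; rewrite !inE.
  by case: (x \in T); rewrite ?orbT.
have hX1 : (#|X :&: (S :&: T)| <= #|S :&: T|)%N by apply: subset_leq_card; apply: subsetIr.
have hY1 : (#|Y :&: (S :&: T)| <= #|S :&: T|)%N by apply: subset_leq_card; apply: subsetIr.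
have cX : (#|X| <= n)%N by apply: max_card.
have cY : (#|Y| <= n)%N by apply: max_card.
have cS : (#|S| <= n)%N by apply: max_card.
have cT : (#|T| <= n)%N by apply: max_card.
rewrite hS1 hT1 hS2 hT2 in ineq.
move: ineq hX1 hY1 cX cY cS cT.
rewrite /N.
set x1 := #|X :&: (S :&: T)|. set y1 := #|Y :&: (S :&: T)|.
set o1 := #|X :&: ~: (S :|: T)|. set o2 := #|Y :&: ~: (S :|: T)|.
set m := #|S :&: T|.
move=> ineq hX1 hY1 cX cY cS cT.
pose D : int := x1%:Z + y1%:Z - o1%:Z - o2%:Z - m%:Z - m%:Z.
pose s : int := sg * (#|X|%:Z + #|Y|%:Z) - sg * (#|S|%:Z + #|T|%:Z).
have hs : s < (2 * n + 1)%:Z.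
  rewrite /s; clear ineq; case: hsg => [->|[->|->]]; rewrite ?mul1r ?mul0r ?mulN1r; clear -cX cY cS cT; lia.
have hND : 0 <= (2 * n + 1)%:Z * D + s.
  move: ineq; rewrite -subr_ge0 => ineq; apply: (le_trans ineq).
  rewrite le_eqVlt; apply/orP; left; apply/eqP; rewrite /D /s /N; ring.
have hN0 : (0:int) < (2 * n + 1)%:Z by clear; lia.
have hD0 : 0 <= D by apply: (arith hN0 hs hND).
have [hx1 hy1 ho1 ho2] : [/\ x1 = m, y1 = m, o1 = 0%N & o2 = 0%N] .
 rewrite /D in hD0; clear -hD0 hX1 hY1; clearbody x1 y1 o1 o2 m; split; lia.
have fin : sg * (#|S|%:Z + #|T|%:Z) <= sg * (#|X|%:Z + #|Y|%:Z).
  have D0 : D = 0 by rewrite /D hx1 hy1 ho1 ho2; clear; lia.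
  by move: hND; rewrite D0 mulr0 add0r /s subr_ge0.

exists X, Y; split => //; last by rewrite eX fX fY eY.
apply/and4P; split.
- by apply: card_sub.
- by apply: card_out.
- by apply: card_sub.
- by apply: card_out.
Qed.
End Comb.

Section Comb2.
Variable E : finType.
Local Open Scope ring_scope.
Variable Q : {set {set E}}.
Hypothesis trop : forall e f, e != f -> forall S0 T0, S0 \in Q -> T0 \in Q ->
  e \in S0 -> f \in S0 -> e \notin T0 -> f \notin T0 -> forall c : E -> int,
  exists X, exists Y, [/\ X \in Q, Y \in Q, [&& e \in X, f \notin X, f \in Y & e \notin Y] &
     csum c S0 + csum c T0 <= csum c X + csum c Y].

Let keyQ := key trop.

Lemma pick2 (A : {set E}) e : e \in A -> (1 < #|A|)%N -> exists f, f \in A /\ f != e.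
Proof.
move=> eA; rewrite (cardsD1 e A) eA add1n ltnS card_gt0 => /set0Pn [f].
by rewrite !inE => /andP [fe fA]; exists f.
Qed.

Lemma card_lt_sub (A B : {set E}) x : A \subset B -> x \in B -> x \notin A -> (#|A| < #|B|)%N.
Proof.
move=> AB xB xA; apply: proper_card; rewrite properEneq AB andbT.
by apply/eqP => h; rewrite h xB in xA.
Qed.

Lemma conv k : forall S U V : {set E}, (#|U :\: S| <= k)%N -> S \in Q -> U \in Q ->
  S \subset V -> V \subset U -> V \in Q.
Proof.
elim: k => [|k IH] S U V hk SQ UQ SV VU.
  have US : U \subset S by rewrite -setD_eq0 -cards_eq0 -leqn0.
  have -> : V = S by apply/eqP; rewrite eqEsubset SV (subset_trans VU US).
  by [].
case: (boolP (V == S)) => [/eqP -> //|VS].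
have [e eVS] : exists e, e \in V :\: S.
  apply/set0Pn; rewrite setD_eq0; apply: contra VS => VS'.
  by rewrite eqEsubset VS' SV.
have eUS : e \in U :\: S by move: eVS; rewrite !inE => /andP [-> /(subsetP VU) ->].
case: (leqP #|U :\: S| 1) => hUS.
  have hUe : U :\: S = [set e].
    apply/eqP; rewrite eq_sym eqEcard sub1set eUS cards1 hUS andbT //.
  have -> : V = U.
    apply/eqP; rewrite eqEsubset VU /=; apply/subsetP => x xU.
    case: (boolP (x \in S)) => [xS|xS]; first by apply: (subsetP SV).
    have : x \in U :\: S by rewrite inE xS xU.
    rewrite hUe inE => /eqP ->; by move: eVS; rewrite inE => /andP [].
  by [].
have [f [fUS fe]] := pick2 eUS hUS.
have SU : S \subset U by apply: subset_trans VU.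
have eI : U :&: S = S by apply/setIidPr.
have eU' : U :|: S = U by apply/setUidPl.
move: (eUS) (fUS); rewrite !inE => /andP [eS eU] /andP [fS fU].
have ef : e != f by rewrite eq_sym.
have [X [Y [XQ YQ /and4P [SX XU _ _] /and4P [eX fX _ _] _]]] :=
  keyQ (sg := 0) UQ SQ ef eU fU eS fS (or_intror (or_introl erefl)).
rewrite eI eU' in SX XU.
have hXS : (#|X :\: S| <= k)%N.
  rewrite -ltnS; apply: leq_trans hk; apply: (card_lt_sub (x := f)) => //.
    by apply: setSD.
  by rewrite inE (negbTE fX) andbF.
have eSQ : e |: S \in Q.
  apply: (IH S X) => //; first by apply: subsetUr.
  apply/subsetP => x; rewrite in_setU1 => /orP [/eqP xe|/(subsetP SX) //].
  by rewrite xe.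
apply: (IH (e |: S) U) => //.
- rewrite -ltnS; apply: leq_trans hk; apply: (card_lt_sub (x := e)) => //.
    by apply: setDS; apply: subsetUr.
  by rewrite !inE eqxx.
- apply/subsetP => x; rewrite in_setU1 => /orP [/eqP xe|/(subsetP SV) //].
  by rewrite xe; move: eVS; rewrite inE => /andP [].
Qed.

Lemma card_swap (S : {set E}) e f : e \in S -> f \notin S -> #|f |: (S :\ e)| = #|S|.
Proof.
move=> eS fS; rewrite cardsU1 !inE (negbTE fS) andbF /= add1n.
by rewrite (cardsD1 e S) eS.
Qed.

Lemma setD_ne0 (A B : {set E}) : ~~ (A \subset B) -> exists x, x \in A :\: B.
Proof. by move=> h; apply/set0Pn; rewrite setD_eq0. Qed.

Lemma cardsID' (A B : {set E}) : #|A| = (#|A :&: B| + #|A :\: B|)%N.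
Proof. by rewrite cardsID. Qed.

Lemma aug_up k : forall S T : {set E}, (#|T :\: S| <= k)%N -> S \in Q -> T \in Q ->
  (#|S| < #|T|)%N -> exists2 g, g \in T :\: S & g |: S \in Q.
Proof.
elim: k => [|k IH] S T hk SQ TQ hST.
  have TS : T \subset S by rewrite -setD_eq0 -cards_eq0 -leqn0.
  by have := subset_leq_card TS; rewrite leqNgt hST.
have nTS : ~~ (T \subset S).
  by apply/negP => TS; have := subset_leq_card TS; rewrite leqNgt hST.
have [e eTS] := setD_ne0 nTS.
case: (leqP #|T :\: S| 1) => h1.
  have c1 : #|T :\: S| = 1%N.
    by apply/eqP; rewrite eqn_leq h1 card_gt0; apply/set0Pn; exists e.
  have [g hg] := cards1P (introT eqP c1).
  have ST : S \subset T.
    rewrite -setD_eq0 -cards_eq0; move: hST.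
    rewrite (cardsID' S T) (cardsID' T S) c1 setIC; lia.
  have gT : g \in T :\: S by rewrite hg inE.
  exists g => //.
  have -> : g |: S = T; last by [].
  apply/eqP; rewrite eqEsubset; apply/andP; split.
    apply/subsetP => x; rewrite in_setU1 => /orP [/eqP ->|/(subsetP ST) //].
    by move: gT; rewrite inE => /andP [].
  apply/subsetP => x xT; rewrite in_setU1; case: (boolP (x \in S)) => xS; first by rewrite orbT.
  have : x \in T :\: S by rewrite inE xS xT.
  by rewrite hg inE => ->.
have [f [fTS fe]] := pick2 eTS h1.
move: (eTS) (fTS); rewrite !inE => /andP [eS eT] /andP [fS fT].
have ef : e != f by rewrite eq_sym.
have step : forall Z, Z \in Q -> Z \subset T :|: S -> forall z, z \in T :\: S -> z \notin Z ->
    (#|S| < #|Z|)%N -> exists2 g, g \in T :\: S & g |: S \in Q.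
  move=> Z ZQ ZTS z zTS zZ hSZ.
  have sub : Z :\: S \subset T :\: S.
    apply/subsetP => x; rewrite !inE => /andP [xS xZ]; rewrite xS /=.
    by move: (subsetP ZTS x xZ); rewrite inE (negbTE xS) orbF.
  have hz : z \notin Z :\: S by rewrite inE (negbTE zZ) andbF.
  have [g gZ gQ] := IH S Z (leq_trans (card_lt_sub sub zTS hz) hk) SQ ZQ hSZ.
  by exists g => //; apply: (subsetP sub).
have [X [Y [XQ YQ /and4P [_ XU _ YU] /and4P [eX fX fY eY] hc]]] :=
  keyQ (sg := 1) TQ SQ ef eT fT eS fS (or_introl erefl).
rewrite !mul1r in hc.
case: (ltnP #|S| #|X|) => hX; first by apply: (step X XQ XU f fTS fX hX).
case: (ltnP #|S| #|Y|) => hY; first by apply: (step Y YQ YU e eTS eY hY).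
move: hc hX hY hST; clear; lia.
Qed.

Lemma aug_down k : forall S T : {set E}, (#|S :\: T| <= k)%N -> S \in Q -> T \in Q ->
  (#|T| < #|S|)%N -> exists2 g, g \in S :\: T & S :\ g \in Q.
Proof.
elim: k => [|k IH] S T hk SQ TQ hST.
  have ST : S \subset T by rewrite -setD_eq0 -cards_eq0 -leqn0.
  by have := subset_leq_card ST; rewrite leqNgt hST.
have nST : ~~ (S \subset T).
  by apply/negP => ST; have := subset_leq_card ST; rewrite leqNgt hST.
have [e eST] := setD_ne0 nST.
case: (leqP #|S :\: T| 1) => h1.
  have c1 : #|S :\: T| = 1%N.
    by apply/eqP; rewrite eqn_leq h1 card_gt0; apply/set0Pn; exists e.
  have [g hg] := cards1P (introT eqP c1).
  have TS : T \subset S.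
    rewrite -setD_eq0 -cards_eq0; move: hST.
    rewrite (cardsID' S T) (cardsID' T S) c1 setIC; lia.
  have gS : g \in S :\: T by rewrite hg inE.
  exists g => //.
  have -> : S :\ g = T; last by [].
  apply/eqP; rewrite eqEsubset; apply/andP; split.
    apply/subsetP => x; rewrite !inE => /andP [xg xS].
    case: (boolP (x \in T)) => // xT.
    have : x \in S :\: T by rewrite inE xS xT.
    by rewrite hg inE (negbTE xg).
  apply/subsetP => x xT; rewrite !inE (subsetP TS x xT) andbT.
  apply/negP => /eqP xg; move: gS; rewrite inE -xg xT. by [].
have [f [fST fe]] := pick2 eST h1.
move: (eST) (fST); rewrite !inE => /andP [eT eS] /andP [fT fS].
have ef : e != f by rewrite eq_sym.
have step : forall Z, Z \in Q -> S :&: T \subset Z -> forall z, z \in S :\: T -> z \in Z ->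
    (#|Z| < #|S|)%N -> exists2 g, g \in S :\: T & S :\ g \in Q.
  move=> Z ZQ STZ z zST zZ hSZ.
  have sub : S :\: Z \subset S :\: T.
    apply/subsetP => x; rewrite !inE => /andP [xZ xS]; rewrite xS andbT.
    apply/negP => xT; move: xZ; rewrite (subsetP STZ x) //; rewrite inE xS xT. by [].
  have hz : z \notin S :\: Z by rewrite inE zZ.
  have [g gZ gQ] := IH S Z (leq_trans (card_lt_sub sub zST hz) hk) SQ ZQ hSZ.
  by exists g => //; apply: (subsetP sub).
have [X [Y [XQ YQ /and4P [SX _ SY _] /and4P [eX fX fY eY] hc]]] :=
  keyQ (sg := -1) SQ TQ ef eS fS eT fT (or_intror (or_intror erefl)).
rewrite !mulN1r in hc.
case: (ltnP #|X| #|S|) => hX; first by apply: (step X XQ SX e eST eX hX).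
case: (ltnP #|Y| #|S|) => hY; first by apply: (step Y YQ SY f fST fY hY).
move: hc hX hY hST; clear; lia.
Qed.

End Comb2.

Section Mat.
Variable E : finType.
Variable F : {set {set E}}.
Variable r : nat.
Hypothesis hF : forall S, S \in F -> #|S| = r.
Hypothesis hex : forall S T e, S \in F -> T \in F -> e \in S :\: T ->
  exists2 f, f \in T :\: S & f |: (S :\ e) \in F.
Hypothesis F0 : F != set0.

Definition down (G : {set {set E}}) := [set I : {set E} | [exists S in G, I \subset S]].

Lemma in_down (G : {set {set E}}) (I : {set E}) : reflect (exists2 S, S \in G & I \subset S) (I \in down G).
Proof. by rewrite inE; apply: (iffP exists_inP). Qed.

Lemma down_matroid : is_matroid (down F).
Proof.
split.
- have [S SF] := set0Pn _ F0; apply/in_down; exists S => //; apply: sub0set.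
- move=> A B /in_down [S SF BS] AB; apply/in_down; exists S => //; exact: subset_trans AB BS.
move=> A B AI BI hAB.
case: (boolP [exists x in B :\: A, x |: A \in down F]) => [/exists_inP [x xBA xI]|H].
  by exists x.
exfalso.
have {}H : forall x, x \in B :\: A -> x |: A \notin down F.
  by move=> x xBA; apply: contra H => xI; apply/exists_inP; exists x.
move/in_down: AI => [S0 S0F AS0]; move/in_down: BI => [T0 T0F BT0].
pose P (p : {set E} * {set E}) := [&& p.1 \in F, A \subset p.1, p.2 \in F & B \subset p.2].
have P0 : P (S0, T0) by rewrite /P S0F AS0 T0F BT0.
case: (arg_maxnP (fun p : {set E} * {set E} => #|p.1 :&: p.2|) P0) => [[S T]] /and4P [SF AS TF BT] hmax.
have SB : forall x, x \in S -> x \in B -> x \in A.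
  move=> x xS xB; apply: contraT => xA.
  have := H x; rewrite inE xA xB => /(_ isT); move=> /negP h; exfalso; apply: h.
  apply/in_down; exists S => //; apply/subsetP => y; rewrite in_setU1 => /orP [/eqP ->//|/(subsetP AS)//].
have [y] : exists y, y \in (S :\: A) :\: T.
  apply: setD_ne0; apply/negP => SAT.
  have sub : S :\: A \subset T :\: B.
    apply/subsetP => x xSA; rewrite inE (subsetP SAT x xSA) andbT.
    move: xSA; rewrite inE => /andP [xA xS]; apply/negP => xB; move: xA; rewrite (SB x xS xB). by [].
  have := subset_leq_card sub.
  have eA : S :&: A = A by apply/setIidPr.
  have eB : T :&: B = B by apply/setIidPr.
  move: (cardsID' S A) (cardsID' T B) (hF SF) (hF TF) hAB; rewrite eA eB /=; lia.
rewrite !inE => /and3P [yT yA yS].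
have yST : y \in S :\: T by rewrite inE yT yS.
have [f fTS S'F] := hex SF TF yST.
have PS' : P (f |: (S :\ y), T).
  rewrite /P S'F TF BT /= andbT; apply/subsetP => x xA; rewrite in_setU1 !inE (subsetP AS x xA) andbT.
  by apply/orP; right; apply/negP => /eqP xy; move: yA; rewrite -xy xA.
have := hmax _ PS'; rewrite /=.
have sub : f |: (S :&: T) \subset (f |: (S :\ y)) :&: T.
  apply/subsetP => x; rewrite in_setU1 => /orP [/eqP ->|].
    move: fTS; rewrite !inE => /andP [_ ->]; by rewrite eqxx.
  rewrite !inE => /andP [xS xT]; rewrite xS xT !andbT; apply/orP; right.
  by apply/negP => /eqP xy; move: yT; rewrite -xy xT.
have := subset_leq_card sub; rewrite cardsU1.
have -> : f \notin S :&: T by move: fTS; rewrite !inE => /andP [/negbTE -> _].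
rewrite /= => h1 h2; clear -h1 h2; lia.
Qed.

Lemma bases_down : bases (down F) = F.
Proof.
apply/setP => B; rewrite inE; apply/andP/idP.
  move=> [/in_down [S SF BS] /forall_inP hmax].
  have SI : S \in down F by apply/in_down; exists S.
  by have /eqP <- := implyP (hmax S SI) BS.
move=> BF; split; first by apply/in_down; exists B.
apply/forall_inP => A /in_down [S SF AS]; apply/implyP => BA.
have BS : B \subset S := subset_trans BA AS.
have eBS : B = S by apply/eqP; rewrite eqEcard BS (hF BF) (hF SF) leqnn.
by rewrite eqEsubset BA andbT eBS.
Qed.
End Mat.

Section Comb3.
Variable E : finType.
Local Open Scope ring_scope.
Variable Q : {set {set E}}.
Hypothesis trop : forall e f, e != f -> forall S0 T0, S0 \in Q -> T0 \in Q ->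
  e \in S0 -> f \in S0 -> e \notin T0 -> f \notin T0 -> forall c : E -> int,
  exists X, exists Y, [/\ X \in Q, Y \in Q, [&& e \in X, f \notin X, f \in Y & e \notin Y] &
     csum c S0 + csum c T0 <= csum c X + csum c Y].

Lemma exch (sg : int) (r : nat) : (sg = 1 \/ sg = -1) ->
  (forall S, S \in Q -> sg * #|S|%:Z <= sg * r%:Z) ->
  forall k (S T : {set E}) e, (#|S :\: T| <= k)%N -> S \in Q -> T \in Q -> #|S| = r -> #|T| = r ->
  e \in S :\: T -> exists2 f, f \in T :\: S & f |: (S :\ e) \in Q.
Proof.
move=> hsg hb; elim => [|k IH] S T e hk SQ TQ hS hT eST.
  by move: hk; rewrite leqn0 cards_eq0 => /eqP h; rewrite h inE in eST.
case: (leqP #|S :\: T| 1) => h1.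
  have c1 : #|S :\: T| = 1%N.
    by apply/eqP; rewrite eqn_leq h1 card_gt0; apply/set0Pn; exists e.
  have cT1 : #|T :\: S| = 1%N.
    move: (cardsID' S T) (cardsID' T S); rewrite setIC hS hT c1; lia.
  have [g hg] := cards1P (introT eqP c1).
  have [f hf] := cards1P (introT eqP cT1).
  have fTS : f \in T :\: S by rewrite hf inE.
  have eg : e = g by move: eST; rewrite hg inE => /eqP.
  move: (eST) (fTS); rewrite !inE => /andP [eT eS] /andP [fS fT].
  exists f; first by rewrite inE fS fT.
  have -> : f |: (S :\ e) = T; last by [].
  apply/eqP; rewrite eqEcard card_swap // hS hT leqnn andbT.
  apply/subsetP => x; rewrite in_setU1 => /orP [/eqP -> //|].
  rewrite !inE => /andP [xe xS]; apply: contraT => xT.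
  have : x \in S :\: T by rewrite inE xT xS.
  by rewrite hg inE -eg (negbTE xe).
have [h [hST he]] := pick2 eST h1.
move: (eST) (hST); rewrite !inE => /andP [eT eS] /andP [hT' hS'].
have eh : e != h by rewrite eq_sym.
have hsg' : sg = 1 \/ sg = 0 \/ sg = -1 by case: hsg; [left|right; right].
have [X [Y [XQ YQ /and4P [_ _ SY YU] /and4P [_ _ hY eY] hc]]] :=
  key trop (sg := sg) SQ TQ eh eS hS' eT hT' hsg'.
have hYr : #|Y| = r.
  have := hb X XQ; have := hb Y YQ; move: hc; rewrite hS hT.
  by case: hsg => ->; rewrite ?mul1r ?mulN1r; clear; lia.
have sub : S :\: Y \subset S :\: T.
  apply/subsetP => x; rewrite !inE => /andP [xY xS]; rewrite xS andbT.
  apply/negP => xT; move: xY; rewrite (subsetP SY x) //; rewrite inE xS xT. by [].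
have hz : h \notin S :\: Y by rewrite inE hY.
have eSY : e \in S :\: Y by rewrite inE eY eS.
have [f fYS fQ] := IH S Y e (leq_trans (card_lt_sub sub hST hz) hk) SQ YQ hS hYr eSY.
exists f => //.
move: fYS; rewrite !inE => /andP [fS fY]; rewrite fS /=.
by move: (subsetP YU f fY); rewrite inE (negbTE fS).
Qed.

Lemma comb_main : Q != set0 -> exists r s : nat,
  [/\ (forall S, S \in Q -> #|S| <= r)%N, (forall S, S \in Q -> s <= #|S|)%N,
      [set S in Q | #|S| == r] != set0, [set S in Q | #|S| == s] != set0 &
      [/\ is_matroid (down [set S in Q | #|S| == r]), is_matroid (down [set S in Q | #|S| == s]),
          Q = down [set S in Q | #|S| == r] :&: spanning (down [set S in Q | #|S| == s]),
          bases (down [set S in Q | #|S| == r]) = [set S in Q | #|S| == r] &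
          bases (down [set S in Q | #|S| == s]) = [set S in Q | #|S| == s]]].
Proof.
move=> Q0; have [S0 S0Q] := set0Pn _ Q0.
case: (arg_maxnP (P := [pred S | S \in Q]) (fun S : {set E} => #|S|) S0Q) => Smax SmQ hmax.
case: (arg_minnP (P := [pred S | S \in Q]) (fun S : {set E} => #|S|) S0Q) => Smin SnQ hmin.
have {}SmQ : Smax \in Q by [].
have {}SnQ : Smin \in Q by [].
exists #|Smax|, #|Smin|.
set r := #|Smax|; set s := #|Smin|.
set Qt := [set S in Q | #|S| == r]; set Qb := [set S in Q | #|S| == s].
have hr : forall S, S \in Q -> (#|S| <= r)%N by move=> S SQ; apply: hmax.
have hs : forall S, S \in Q -> (s <= #|S|)%N by move=> S SQ; apply: hmin.
have Qt0 : Qt != set0 by apply/set0Pn; exists Smax; rewrite inE SmQ eqxx.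
have Qb0 : Qb != set0 by apply/set0Pn; exists Smin; rewrite inE SnQ eqxx.
have hFt : forall S, S \in Qt -> #|S| = r by move=> S; rewrite inE => /andP [_ /eqP].
have hFb : forall S, S \in Qb -> #|S| = s by move=> S; rewrite inE => /andP [_ /eqP].
have hext : forall S T e, S \in Qt -> T \in Qt -> e \in S :\: T ->
    exists2 f, f \in T :\: S & f |: (S :\ e) \in Qt.
  move=> S T e SQ TQ eST.
  have hb : forall S, S \in Q -> (1:int) * #|S|%:Z <= 1 * r%:Z.
    by move=> S' S'Q; rewrite !mul1r lez_nat; apply: hr.
  have SQ' : S \in Q by move: SQ; rewrite inE => /andP [].
  have TQ' : T \in Q by move: TQ; rewrite inE => /andP [].
  have [f fTS fQ] := exch (or_introl erefl) hb (leqnn _) SQ' TQ' (hFt _ SQ) (hFt _ TQ) eST.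
  exists f => //; rewrite inE fQ /= card_swap ?(hFt _ SQ) //.
    by move: eST; rewrite inE => /andP [].
  by move: fTS; rewrite inE => /andP [].
have hexb : forall S T e, S \in Qb -> T \in Qb -> e \in S :\: T ->
    exists2 f, f \in T :\: S & f |: (S :\ e) \in Qb.
  move=> S T e SQ TQ eST.
  have hb : forall S, S \in Q -> (-1:int) * #|S|%:Z <= -1 * s%:Z.
    by move=> S' S'Q; rewrite !mulN1r lerN2 lez_nat; apply: hs.
  have SQ' : S \in Q by move: SQ; rewrite inE => /andP [].
  have TQ' : T \in Q by move: TQ; rewrite inE => /andP [].
  have [f fTS fQ] := exch (or_intror erefl) hb (leqnn _) SQ' TQ' (hFb _ SQ) (hFb _ TQ) eST.
  exists f => //; rewrite inE fQ /= card_swap ?(hFb _ SQ) //.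
    by move: eST; rewrite inE => /andP [].
  by move: fTS; rewrite inE => /andP [].
have up_ext : forall k (S : {set E}), (r - #|S| <= k)%N -> S \in Q -> exists2 T, T \in Qt & S \subset T.
  elim => [|k IH] S hk SQ.
    exists S => //; rewrite inE SQ /=; apply/eqP; have := hr S SQ; move: hk; clear; lia.
  case: (ltnP #|S| r) => hSr; last first.
    exists S => //; rewrite inE SQ /=; apply/eqP; have := hr S SQ; move: hSr; clear; lia.
  have [g gS gQ] := aug_up trop (leqnn #|Smax :\: S|) SQ SmQ hSr.
  have gS' : g \notin S by move: gS; rewrite inE => /andP [].
  have hk' : (r - #|g |: S| <= k)%N by rewrite cardsU1 gS' /=; move: hk hSr; clear; lia.
  have [T TQ gST] := IH _ hk' gQ.
  by exists T => //; exact: subset_trans (subsetUr _ _) gST.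
have down_ext : forall k (S : {set E}), (#|S| - s <= k)%N -> S \in Q -> exists2 B, B \in Qb & B \subset S.
  elim => [|k IH] S hk SQ.
    exists S => //; rewrite inE SQ /=; apply/eqP; have := hs S SQ; move: hk; clear; lia.
  case: (ltnP s #|S|) => hSs; last first.
    exists S => //; rewrite inE SQ /=; apply/eqP; have := hs S SQ; move: hSs; clear; lia.
  have [g gS gQ] := aug_down trop (leqnn #|S :\: Smin|) SQ SnQ hSs.
  have gS' : g \in S by move: gS; rewrite inE => /andP [].
  have hk' : (#|S :\ g| - s <= k)%N.
    by move: hk hSs; rewrite (cardsD1 g S) gS'; clear; lia.
  have [B BQ BSg] := IH _ hk' gQ.
  by exists B => //; exact: subset_trans BSg (subsetDl _ _).
split => //; split.
- exact: down_matroid hFt hext Qt0.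
- exact: down_matroid hFb hexb Qb0.
- apply/setP => S; rewrite inE; apply/idP/andP.
    move=> SQ; split.
      have [T TQ ST] := up_ext _ _ (leqnn _) SQ.
      by apply/in_down; exists T.
    have [B BQ BS] := down_ext _ _ (leqnn _) SQ.
    by rewrite inE; apply/exists_inP; exists B => //; rewrite (bases_down hFb).
  move=> [/in_down [T TQ ST]]; rewrite inE => /exists_inP [B]; rewrite (bases_down hFb) => BQ BS.
  have TQ' : T \in Q by move: TQ; rewrite inE => /andP [].
  have BQ' : B \in Q by move: BQ; rewrite inE => /andP [].
  exact: (conv trop (leqnn #|T :\: B|) BQ' TQ' BS ST).
- exact: bases_down hFt.
- exact: bases_down hFb.
Qed.
End Comb3.
Section Anal.
Variables (R : realType) (E : finType).
Local Open Scope ring_scope.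

Definition mono (y : E -> R) (S : {set E}) : R := \prod_(g in S) y g.
Definition pA (e f : E) (S : {set E}) := (e \notin S) && (f \notin S).
Definition pB (e f : E) (S : {set E}) := (e \in S) && (f \notin S).
Definition pC (e f : E) (S : {set E}) := (f \in S) && (e \notin S).
Definition pD (e f : E) (S : {set E}) := (e \in S) && (f \in S).
Definition sP (P : {set E} -> bool) (w : {set E} -> R) (y : E -> R) : R :=
  \sum_(S : {set E} | P S) w S * mono y S.

Lemma zpol_split w e f y : Zpol w y = sP (pA e f) w y + sP (pB e f) w y + sP (pC e f) w y + sP (pD e f) w y.
Proof.
rewrite /Zpol /sP (big_mkcond (pA e f)) (big_mkcond (pB e f)) (big_mkcond (pC e f)) (big_mkcond (pD e f)).
rewrite -!big_split /=; apply: eq_bigr => S _.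
rewrite /pA /pB /pC /pD /mono.
by case: (e \in S); case: (f \in S); rewrite /= ?addr0 ?add0r.
Qed.

Lemma zd1e w e f y : y e * Zd1 w e y = sP (pB e f) w y + sP (pD e f) w y.
Proof.
rewrite /Zd1 /sP mulr_sumr big_mkcond (big_mkcond (pB e f)) (big_mkcond (pD e f)).
rewrite -!big_split /=; apply: eq_bigr => S _.
rewrite /pB /pD /mono.
case eS: (e \in S); case: (f \in S); rewrite /= ?addr0 ?add0r ?mulr0 //;
  by rewrite [in RHS](big_setD1 e) //= mulrCA.
Qed.

Lemma zd1f w e f y : y f * Zd1 w f y = sP (pC e f) w y + sP (pD e f) w y.
Proof.
rewrite /Zd1 /sP mulr_sumr big_mkcond (big_mkcond (pC e f)) (big_mkcond (pD e f)).
rewrite -!big_split /=; apply: eq_bigr => S _.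
rewrite /pC /pD /mono.
case fS: (f \in S); case: (e \in S); rewrite /= ?addr0 ?add0r ?mulr0 //;
  by rewrite [in RHS](big_setD1 f) //= mulrCA.
Qed.

Lemma zd2 w e f y : e != f -> y e * y f * Zd2 w e f y = sP (pD e f) w y.
Proof.
move=> ef.
rewrite /Zd2 /sP mulr_sumr big_mkcond (big_mkcond (pD e f)) /=.
apply: eq_bigr => S _.
rewrite /pD /mono.
case eS: (e \in S); case fS: (f \in S); rewrite /= ?mulr0 //.
rewrite [in RHS](big_setD1 e) //= [in RHS](big_setD1 f) /=; last by rewrite !inE fS eq_sym ef.
ring.
Qed.

Lemma delta_id w e f y : e != f ->
  y e * y f * (Zd1 w e y * Zd1 w f y - Zd2 w e f y * Zpol w y) =
  sP (pB e f) w y * sP (pC e f) w y - sP (pD e f) w y * sP (pA e f) w y.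
Proof.
move=> ef.
have -> : y e * y f * (Zd1 w e y * Zd1 w f y - Zd2 w e f y * Zpol w y) =
  (y e * Zd1 w e y) * (y f * Zd1 w f y) - (y e * y f * Zd2 w e f y) * Zpol w y by ring.
rewrite (zd1e w e f) (zd1f w e f) zd2 // (zpol_split w e f); ring.
Qed.

Definition ray2 (w : {set E} -> R) := forall e f, e != f -> forall y : E -> R, (forall g, 0 < y g) ->
  sP (pD e f) w y * sP (pA e f) w y <= sP (pB e f) w y * sP (pC e f) w y.

Lemma ray_iff w : rayleigh_poly w <-> ray2 w.
Proof.
split => h e f ef y ypos.
  rewrite -subr_ge0 -(delta_id w y ef); apply: mulr_ge0; last by apply: h.
  by apply: mulr_ge0; apply: ltW.
have H := h e f ef y ypos; rewrite -subr_ge0 -(delta_id w y ef) in H.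
have yy : 0 < y e * y f by apply: mulr_gt0.
by rewrite pmulr_rge0 in H.
Qed.
End Anal.

Section Anal2.
Variables (R : realType) (E : finType).
Local Open Scope ring_scope.

Lemma prod_sums (P1 P2 : pred {set E}) (u v : {set E} -> R) :
  (\sum_(S | P1 S) u S) * (\sum_(T | P2 T) v T) =
  \sum_(p : {set E} * {set E}) (if P1 p.1 && P2 p.2 then u p.1 * v p.2 else 0).
Proof. by rewrite big_distrlr /= pair_big /= big_mkcond. Qed.

Definition Wt (w : {set E} -> R) (y : E -> R) (p : {set E} * {set E}) :=
  w p.1 * mono y p.1 * (w p.2 * mono y p.2).
Definition aco w e f y p : R :=
  (if pB e f p.1 && pC e f p.2 then Wt w y p else 0) -
  (if pD e f p.1 && pA e f p.2 then Wt w y p else 0).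

Lemma delta_sum w e f y :
  sP (pB e f) w y * sP (pC e f) w y - sP (pD e f) w y * sP (pA e f) w y =
  \sum_(p : {set E} * {set E}) aco w e f y p.
Proof. by rewrite /sP !prod_sums -sumrB. Qed.

Lemma mono_t (z : E -> R) (c : E -> int) t S : 0 < t ->
  mono (fun g => z g * t ^ c g) S = mono z S * t ^ csum c S.
Proof.
move=> tpos; rewrite /mono big_split /=; congr (_ * _); rewrite /csum.
apply/esym; apply: (big_morph (fun n : int => t ^ n)).
  by move=> x y; rewrite expfzDr // gt_eqF.
by rewrite expr0z.
Qed.

Lemma aco_t w e f (z : E -> R) (c : E -> int) t p : 0 < t ->
  aco w e f (fun g => z g * t ^ c g) p = aco w e f z p * t ^ (csum c p.1 + csum c p.2).
Proof.
move=> tpos; rewrite /aco /Wt !mono_t // expfzDr ?gt_eqF //.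
by case: (_ && _); case: (_ && _); ring.
Qed.

Lemma exprz_le_mono (t : R) (k j : int) : 1 <= t -> k <= j -> t ^ k <= t ^ j.
Proof.
move=> t1 kj.
have tpos : 0 < t by apply: lt_le_trans t1.
have -> : j = k + (j - k) by rewrite addrC subrK.
rewrite expfzDr ?gt_eqF //.
have : 0 <= j - k by rewrite subr_ge0.
case: (j - k) => // n _.
rewrite -[X in X <= _]mulr1 ler_pM2l ?exprz_gt0 //.
exact: (exprn_ege1 n t1).
Qed.

Lemma dominate (I : finType) (a : I -> R) (k : I -> int) (M : int) :
  (forall i, M < k i -> a i <= 0) -> \sum_(i | k i == M) a i < 0 ->
  exists t, 0 < t /\ \sum_i a i * t ^ k i < 0.
Proof.
move=> hgt hN.
set N := \sum_(i | k i == M) a i in hN.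
set C := \sum_(i | k i < M) `|a i|.
have C0 : 0 <= C by apply: sumr_ge0 => i _; apply: normr_ge0.
pose t := 1 + C / (- N).
have t1 : 1 <= t by rewrite /t lerDl divr_ge0 // oppr_ge0 ltW.
have tpos : 0 < t by apply: lt_le_trans t1.
exists t; split => //.
pose b i := (if k i == M then a i else 0) * t ^ M + (if k i < M then `|a i| else 0) * t ^ (M - 1).
apply: (le_lt_trans (y := \sum_i b i)).
  apply: ler_sum => i _; rewrite /b.
  case: (ltgtP (k i) M) => hk.
  - rewrite mul0r add0r; apply: (le_trans (y := `|a i| * t ^ k i)).
      by rewrite ler_wpM2r ?ler_norm // ltW // exprz_gt0.
    rewrite ler_wpM2l ?normr_ge0 //; apply: exprz_le_mono => //.
    by move: hk; clear; lia.
  - rewrite !mul0r addr0; apply: mulr_le0_ge0; first by apply: hgt.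
    by apply: ltW; apply: exprz_gt0.
  - by rewrite hk mul0r addr0.
rewrite big_split /= -!mulr_suml -!big_mkcond /= -/N -/C.
have -> : t ^ M = t ^ (M - 1) * t by rewrite -{1}(subrK 1 M) expfzDr ?gt_eqF // expr1z.
have -> : N * (t ^ (M - 1) * t) + C * t ^ (M - 1) = t ^ (M - 1) * (N * t + C) by ring.
have -> : N * t + C = N.
  have hN0 : N != 0 by rewrite lt_eqF.
  rewrite /t; field; by rewrite ?oppr_eq0.
by rewrite pmulr_rlt0 // exprz_gt0.
Qed.
End Anal2.

Section Anal3.
Variables (R : realType) (E : finType).
Local Open Scope ring_scope.

Lemma Wt_ge0 (w : {set E} -> R) z p : (forall S, 0 <= w S) -> (forall g, 0 < z g) -> 0 <= Wt w z p.
Proof.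
move=> w0 zpos; rewrite /Wt /mono.
by apply: mulr_ge0; apply: mulr_ge0 => //; apply: prodr_ge0 => g _; apply: ltW.
Qed.

Lemma Wt0 (w : {set E} -> R) z p : (forall S, 0 <= w S) -> ~~ ((0 < w p.1) && (0 < w p.2)) -> Wt w z p = 0.
Proof.
move=> w0; rewrite negb_and /Wt => /orP [h|h].
  have -> : w p.1 = 0 by apply/eqP; rewrite eq_le w0 andbT leNgt.
  by rewrite !mul0r.
have -> : w p.2 = 0 by apply/eqP; rewrite eq_le w0 andbT leNgt.
by rewrite !mul0r mulr0.
Qed.

Lemma aco0 w e f (z : E -> R) p : Wt w z p = 0 -> aco w e f z p = 0.
Proof. by rewrite /aco => ->; case: (_ && _); case: (_ && _); rewrite subrr. Qed.

Lemma acoW w1 w2 e f (z : E -> R) p : Wt w1 z p = Wt w2 z p -> aco w1 e f z p = aco w2 e f z p.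
Proof. by rewrite /aco => ->. Qed.

Lemma ray_trop (w : {set E} -> R) : (forall S, 0 <= w S) -> rayleigh_poly w ->
  forall e f, e != f -> forall S0 T0, S0 \in [set S | 0 < w S] -> T0 \in [set S | 0 < w S] ->
  e \in S0 -> f \in S0 -> e \notin T0 -> f \notin T0 -> forall c : E -> int,
  exists X, exists Y, [/\ X \in [set S | 0 < w S], Y \in [set S | 0 < w S],
     [&& e \in X, f \notin X, f \in Y & e \notin Y] &
     csum c S0 + csum c T0 <= csum c X + csum c Y].
Proof.
move=> w0 hray e f ef S0 T0 S0Q T0Q eS0 fS0 eT0 fT0 c.
rewrite !inE in S0Q T0Q.
set M := csum c S0 + csum c T0.
case: (boolP [exists p : {set E} * {set E}, [&& 0 < w p.1, 0 < w p.2, pB e f p.1, pC e f p.2 &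
   M <= csum c p.1 + csum c p.2]]).
  move=> /existsP [[X Y]] /and5P [/= hX hY] /andP [eX fX] /andP [fY eY] hM.
  by exists X, Y; split; rewrite ?inE ?eX ?fX ?fY ?eY.
move=> H; exfalso.
pose z := fun _ : E => (1 : R).
have zpos : forall g, 0 < z g by move=> g; apply: ltr01.
pose k := fun p : {set E} * {set E} => csum c p.1 + csum c p.2.
have hneg : forall p, M <= k p -> aco w e f z p <= 0.
  move=> p hk; rewrite /aco.
  have hW := Wt_ge0 p w0 zpos.
  have -> : (if pB e f p.1 && pC e f p.2 then Wt w z p else 0) = 0.
    case hb: (pB e f p.1 && pC e f p.2) => //.
    apply: Wt0 => //; apply/negP => /andP [h1 h2].
    move/negP: H; apply; apply/existsP; exists p.
    by move/andP: hb => [-> ->]; rewrite h1 h2 hk.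
  by rewrite sub0r oppr_le0; case: (_ && _).
have [t [tpos ht]] : exists t, 0 < t /\ \sum_p aco w e f z p * t ^ k p < 0.
  apply: (dominate (M := M)).
    by move=> p hp; apply: hneg; apply: ltW.
  rewrite (bigD1 (S0, T0)) /=; last by rewrite /k eqxx.
  apply: (le_lt_trans (y := aco w e f z (S0, T0))).
    rewrite -[X in _ <= X]addr0 lerD2l; apply: sumr_le0 => p /andP [/eqP hk _].
    by apply: hneg; rewrite hk.
  rewrite /aco /pB /pD /pA /= fS0 eS0 (negbTE eT0) (negbTE fT0) /= sub0r oppr_lt0.
  rewrite /Wt /mono /z !prodr_const !expr1n !mulr1.
  by apply: mulr_gt0.
have := (proj1 (ray_iff w) hray e f ef (fun g => z g * t ^ c g)).
have ypos : forall g, 0 < z g * t ^ c g by move=> g; rewrite mulr_gt0 // exprz_gt0.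
move=> /(_ ypos); rewrite -subr_ge0 delta_sum.
under eq_bigr => p _ do rewrite aco_t //.
by rewrite leNgt ht.
Qed.
End Anal3.

Section Anal4.
Variables (R : realType) (E : finType).
Local Open Scope ring_scope.

Lemma csum_const (sg : int) (S : {set E}) : csum (fun _ => sg) S = sg * #|S|%:Z.
Proof. by rewrite /csum sumr_const -mulr_natr natz. Qed.

Lemma ray_ext (w1 w2 : {set E} -> R) : (forall S, w1 S = w2 S) -> rayleigh_poly w1 -> rayleigh_poly w2.
Proof.
move=> h /ray_iff h1; apply/ray_iff => e f ef y ypos.
have E2 : forall P, sP P w2 y = sP P w1 y by move=> P; apply: eq_bigr => S _; rewrite h.
by rewrite !E2; apply: h1.
Qed.

Lemma ray_restr (w : {set E} -> R) (sg : int) (r : nat) : (forall S, 0 <= w S) -> rayleigh_poly w ->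
  (sg = 1 \/ sg = -1) -> (forall S, 0 < w S -> sg * #|S|%:Z <= sg * r%:Z) ->
  rayleigh_poly (fun S => if #|S| == r then w S else 0).
Proof.
move=> w0 hray hsg hb.
set w' := fun S : {set E} => if #|S| == r then w S else 0.
have w'0 : forall S : {set E}, 0 <= w' S by move=> S; rewrite /w'; case: (_ == _).
apply/ray_iff => e f ef z zpos; rewrite leNgt; apply/negP => hlt.
pose c := fun _ : E => sg.
pose k := fun p : {set E} * {set E} => csum c p.1 + csum c p.2.
pose M := sg * r%:Z + sg * r%:Z.
have hk : forall p, k p = sg * #|p.1|%:Z + sg * #|p.2|%:Z by move=> p; rewrite /k !csum_const.
have [t [tpos ht]] : exists t, 0 < t /\ \sum_p aco w e f z p * t ^ k p < 0.
  apply: (dominate (M := M)).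
    move=> p hp; rewrite aco0 //; apply: Wt0 => //; apply/negP => /andP [h1 h2].
    have := hb _ h1; have := hb _ h2; move: hp; rewrite hk /M; clear; lia.
  move: hlt; rewrite -subr_lt0 delta_sum => hlt.
  apply: (le_lt_trans _ hlt); rewrite le_eqVlt; apply/orP; left; apply/eqP.
  rewrite big_mkcond /=; apply: eq_bigr => p _.
  case: (boolP ((0 < w p.1) && (0 < w p.2))) => [/andP [h1 h2]|hn]; last first.
    rewrite !aco0 ?if_same //; apply: Wt0 => //; apply: contra hn.
    rewrite /w'; case: (_ == _); case: (_ == _); rewrite ?ltxx ?andbF //.
  have b1 := hb _ h1; have b2 := hb _ h2.
  case: (boolP (k p == M)) => hkM.
    have [e1 e2] : #|p.1| = r /\ #|p.2| = r.
      move: hkM b1 b2; rewrite hk /M => /eqP.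
      by case: hsg => ->; rewrite ?mul1r ?mulN1r; clear; split; lia.
    by apply: acoW; rewrite /Wt /w' e1 e2 !eqxx.
  rewrite aco0 //; apply: Wt0 => //; apply/negP; rewrite /w'.
  case E1: (#|p.1| == r); case E2: (#|p.2| == r); rewrite ?ltxx ?andbF //.
  move: hkM; rewrite hk /M (eqP E1) (eqP E2) eqxx. by [].
have := (proj1 (ray_iff w) hray e f ef (fun g => z g * t ^ c g)).
have ypos : forall g, 0 < z g * t ^ c g by move=> g; rewrite mulr_gt0 // exprz_gt0.
move=> /(_ ypos); rewrite -subr_ge0 delta_sum.
under eq_bigr => p _ do rewrite aco_t //.
by rewrite leNgt ht.
Qed.
End Anal4.


Theorem corollary4p11 (R : realType) (E : finType) (Q : {set {set E}}) :
  (Rayleigh R Q ->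
     exists IM IN : {set {set E}},
       [/\ is_matroid IM, is_matroid IN, Q = IM :&: spanning IN,
           Rayleigh R (bases IM) & Rayleigh R (bases IN)]) /\
  (weakly_Rayleigh R Q ->
     exists IM IN : {set {set E}},
       [/\ is_matroid IM, is_matroid IN, Q = IM :&: spanning IN,
           weakly_Rayleigh R (bases IM) & weakly_Rayleigh R (bases IN)]).
Proof.
split.
  move=> [Q0 hray].
  pose w := fun S : {set E} => if S \in Q then (1 : R)%R else 0%R.
  have w0 : forall S, (0 <= w S)%R by move=> S; rewrite /w; case: (_ \in _); rewrite ?ler01.
  have wQ : [set S | (0 < w S)%R] = Q.
    by apply/setP => S; rewrite inE /w; case: (S \in Q); rewrite ?ltr01 ?ltxx.
  have tr := ray_trop w0 hray; rewrite wQ in tr.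
  have [r [s [hr hs Qt0 Qb0 [M1 M2 eQ B1 B2]]]] := comb_main tr Q0.
  exists (down [set S in Q | #|S| == r]), (down [set S in Q | #|S| == s]).
  split => //; rewrite ?B1 ?B2; split => //.
    apply: (ray_ext (w1 := fun S => if #|S| == r then w S else 0%R)).
      by move=> S; rewrite /w inE; case: (S \in Q); case: (_ == _).
    apply: (ray_restr (sg := 1)) => //; first by left.
    move=> S; rewrite /w; case SQ: (S \in Q); rewrite ?ltxx // => _.
    by rewrite !mul1r lez_nat; apply: hr.
  apply: (ray_ext (w1 := fun S => if #|S| == s then w S else 0%R)).
    by move=> S; rewrite /w inE; case: (S \in Q); case: (_ == _).
  apply: (ray_restr (sg := -1)) => //; first by right.
  move=> S; rewrite /w; case SQ: (S \in Q); rewrite ?ltxx // => _.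
  by rewrite !mulN1r lerN2 lez_nat; apply: hs.
move=> [Q0 [w [w0 [wsupp hray]]]].
have wQ : [set S | (0 < w S)%R] = Q by apply/setP => S; rewrite inE wsupp.
have tr := ray_trop w0 hray; rewrite wQ in tr.
have [r [s [hr hs Qt0 Qb0 [M1 M2 eQ B1 B2]]]] := comb_main tr Q0.
exists (down [set S in Q | #|S| == r]), (down [set S in Q | #|S| == s]).
split => //; rewrite ?B1 ?B2; split => //.
  exists (fun S : {set E} => if #|S| == r then w S else 0%R); split; [|split].
  - by move=> S; case: (_ == _).
  - by move=> S; rewrite inE -wsupp; case: (_ == _); rewrite ?andbT ?andbF ?ltxx.
  apply: (ray_restr (sg := 1)) => //; first by left.
  move=> S; rewrite wsupp => SQ.
  by rewrite !mul1r lez_nat; apply: hr.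
exists (fun S : {set E} => if #|S| == s then w S else 0%R); split; [|split].
- by move=> S; case: (_ == _).
- by move=> S; rewrite inE -wsupp; case: (_ == _); rewrite ?andbT ?andbF ?ltxx.
apply: (ray_restr (sg := -1)) => //; first by right.
move=> S; rewrite wsupp => SQ.
by rewrite !mulN1r lerN2 lez_nat; apply: hs.
Qed.
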